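(* Let $f:I\to\mathbb{Q}_4$ be a $3$-generic conformal geodesic with Frenet frame $e:I\to\mathrm{M\ddot{o}b}(4)$, conformal arclength $s$ and curvatures $\mu_1,\mu_2,\mu_3$ (so $\mu_1+\frac32\mu_2^2=C_1$, $\mu_2^2\mu_3=C_2$, $\dot\mu_2^2+\mu_2^4-2C_1\mu_2^2+C_2^2\mu_2^{-2}=C_3$ for constants $C_1,C_2,C_3$). Let $\Phi(s)=e^{-1}\dot e$ be the $6\times6$ matrix (rows/columns indexed $0,\dots,5$) $$\Phi=\begin{pmatrix}0&\mu_1&1&0&0&0\\1&0&0&0&0&\mu_1\\0&0&0&-\mu_2&0&1\\0&0&\mu_2&0&-\mu_3&0\\0&0&0&\mu_3&0&0\\0&1&0&0&0&0\end{pmatrix},\qquad \Theta=\begin{pmatrix}0&1&-\mu_1-\mu_2^2&\dot\mu_2&\mu_2\mu_3&0\\0&0&0&-\mu_2&0&1\\1&0&0&0&0&-\mu_1-\mu_2^2\\0&\mu_2&0&0&0&\dot\mu_2\\0&0&0&0&0&\mu_2\mu_3\\0&0&1&0&0&0\end{pmatrix}.$$ Then $\dot\Theta=\Theta\Phi-\Phi\Theta$ on $I$; consequently $\omega=e\Theta e^{-1}$ is a constant element of the Lie algebra of $\mathrm{M\ddot{o}b}(4)$, and the characteristic polynomial of $\Theta$ (and of $\omega$) is $$\chi(t)=t^6+2C_1t^4-(1+C_3)t^2-C_2^2 .$$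
   Context: $\mathbb{Q}_4$ is the projectivized null cone of $\langle v,w\rangle=\sum_{A=1}^4v^Aw^A-v^0w^5-v^5w^0$ on $\mathbb{R}^6$; $\mathrm{M\ddot{o}b}(4)$ is the identity component of its isometry group. A Frenet frame along a $3$-generic curve $f$ is a smooth $e=(e_0|\dots|e_5):I\to\mathrm{M\ddot{o}b}(4)$ with $[e_0]=f$ whose Maurer–Cartan form $e^{-1}de$ equals $\Phi\,ds$ with $\Phi$ as displayed, $\mu_2>0$, $\mu_3\neq0$; $s$ is the conformal arclength and dots are $d/ds$. Being a conformal geodesic (critical point of the conformal arclength functional under compactly supported variations) is equivalent, for such curves, to $\dot\mu_1+3\mu_2\dot\mu_2=0$, $\ddot\mu_2=\mu_2^3+2\mu_1\mu_2+\mu_2\mu_3^2$, $2\dot\mu_2\mu_3+\mu_2\dot\mu_3=0$, whose first integrals are the stated relations with constants $C_1,C_2,C_3$. *)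

(* Defs.v *)
From Stdlib Require Import Reals Lra.
Open Scope R_scope.

(* Square real matrices, indexed by nat; only indices < n are meaningful. *)
Definition Mat := nat -> nat -> R.

Fixpoint rsum (n : nat) (f : nat -> R) : R :=
  match n with O => 0 | S k => rsum k f + f k end.

Definition mmul (n : nat) (A B : Mat) : Mat :=
  fun i j => rsum n (fun k => A i k * B k j).

Definition mtr (A : Mat) : Mat := fun i j => A j i.

Definition minor0 (A : Mat) (j : nat) : Mat :=
  fun i k => A (S i) (if Nat.ltb k j then k else S k).

Fixpoint det (n : nat) (A : Mat) : R :=
  match n with
  | O => 1
  | S m => rsum (S m) (fun j => (-1) ^ j * A 0%nat j * det m (minor0 A j))
  end.

Definition idm : Mat := fun i j => if Nat.eqb i j then 1 else 0.

Definition charpoly6 (A : Mat) (t : R) : R :=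
  det 6 (fun i j => t * idm i j - A i j).

(* Gram matrix of <v,w> = sum_{A=1}^4 v^A w^A - v^0 w^5 - v^5 w^0 *)
Definition Jform : Mat := fun i j =>
  match i, j with
  | 0%nat, 5%nat => -1 | 5%nat, 0%nat => -1
  | 1%nat, 1%nat => 1 | 2%nat, 2%nat => 1 | 3%nat, 3%nat => 1 | 4%nat, 4%nat => 1
  | _, _ => 0 end.

Definition bil (v w : nat -> R) : R :=
  rsum 6 (fun i => rsum 6 (fun j => v i * Jform i j * w j)).

(* Mob(4): identity component of the isometry group of <,>:
   isometries with det 1 preserving time orientation (the timelike
   vector T = e_0 + e_5, <T,T> = -2, is mapped into the same time cone). *)
Definition Tvec : nat -> R := fun i => match i with 0%nat | 5%nat => 1 | _ => 0 end.

Definition in_Mob4 (e : Mat) : Prop :=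
  (forall i j, (i < 6)%nat -> (j < 6)%nat ->
     mmul 6 (mtr e) (mmul 6 Jform e) i j = Jform i j) /\
  det 6 e = 1 /\
  bil (fun i => rsum 6 (fun k => e i k * Tvec k)) Tvec < 0.

Definition in_mob4 (X : Mat) : Prop :=
  forall i j, (i < 6)%nat -> (j < 6)%nat ->
    mmul 6 (mtr X) Jform i j + mmul 6 Jform X i j = 0.

Definition PhiM (m1 m2 m3 : R) : Mat := fun i j =>
  match i, j with
  | 0%nat, 1%nat => m1 | 0%nat, 2%nat => 1
  | 1%nat, 0%nat => 1 | 1%nat, 5%nat => m1
  | 2%nat, 3%nat => - m2 | 2%nat, 5%nat => 1
  | 3%nat, 2%nat => m2 | 3%nat, 4%nat => - m3
  | 4%nat, 3%nat => m3
  | 5%nat, 1%nat => 1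
  | _, _ => 0 end.

(* The matrix Theta; dm2 stands for the derivative of mu_2 *)
Definition ThetaM (m1 m2 m3 dm2 : R) : Mat := fun i j =>
  match i, j with
  | 0%nat, 1%nat => 1 | 0%nat, 2%nat => - m1 - m2 ^ 2 | 0%nat, 3%nat => dm2 | 0%nat, 4%nat => m2 * m3
  | 1%nat, 3%nat => - m2 | 1%nat, 5%nat => 1
  | 2%nat, 0%nat => 1 | 2%nat, 5%nat => - m1 - m2 ^ 2
  | 3%nat, 1%nat => m2 | 3%nat, 5%nat => dm2
  | 4%nat, 5%nat => m2 * m3
  | 5%nat, 2%nat => 1
  | _, _ => 0 end.

Definition is_open_interval (I : R -> Prop) : Prop :=
  (exists x, I x) /\
  (forall x y z, I x -> I y -> x <= z <= y -> I z) /\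
  (forall x, I x -> exists eps, 0 < eps /\ forall y, Rabs (y - x) < eps -> I y).

(* Main.v *)
Set Warnings "-all".
Require Import Defs.
From Stdlib Require Import Reals.
From Stdlib Require Import Lra Lia ClassicalEpsilon FunctionalExtensionality.
From HB Require structures.
From mathcomp Require all_boot all_algebra.
Module Bridge.
Import HB.structures.
Import all_boot all_algebra.
Import GRing.Theory.

Definition Reqb (x y : R) : bool := if Req_EM_T x y then true else false.
Lemma ReqbP : Equality.axiom Reqb.
Proof. move=> x y; rewrite /Reqb; case: Req_EM_T => H; [by constructor | by constructor]. Qed.
HB.instance Definition _ := hasDecEq.Build R ReqbP.

Definition Rfind (P : pred R) (n : nat) : option R :=
  match excluded_middle_informative (exists x, P x) with
  | left H => Some (proj1_sig (constructive_indefinite_description _ H))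
  | right _ => None end.
Lemma Rfind_correct P n x : Rfind P n = Some x -> P x.
Proof. rewrite /Rfind; case: excluded_middle_informative => // H [<-].
exact: proj2_sig (constructive_indefinite_description _ H). Qed.
Lemma Rfind_complete (P : pred R) : (exists x, P x) -> exists n, Rfind P n.
Proof. move=> H; exists 0%N; rewrite /Rfind; case: excluded_middle_informative => //. Qed.
Lemma Rfind_ext (P Q : pred R) : P =1 Q -> Rfind P =1 Rfind Q.
Proof. move=> H; have -> : P = Q by apply: functional_extensionality. by []. Qed.
HB.instance Definition _ := hasChoice.Build R Rfind_correct Rfind_complete Rfind_ext.

Lemma RaddA : associative Rplus. Proof. move=> x y z; ring. Qed.
Lemma RaddC : commutative Rplus. Proof. move=> x y; ring. Qed.
Lemma Radd0 : left_id (IZR 0) Rplus. Proof. move=> x; ring. Qed.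
Lemma RaddN : left_inverse (IZR 0) Ropp Rplus. Proof. move=> x; ring. Qed.
HB.instance Definition _ := GRing.isZmodule.Build R RaddA RaddC Radd0 RaddN.
Lemma RmulA : associative Rmult. Proof. move=> x y z; ring. Qed.
Lemma RmulC : commutative Rmult. Proof. move=> x y; ring. Qed.
Lemma Rmul1 : left_id (IZR 1) Rmult. Proof. move=> x; ring. Qed.
Lemma RmulD : left_distributive Rmult Rplus. Proof. move=> x y z; ring. Qed.
Lemma R10 : (IZR 1 != IZR 0 :> R). Proof. apply/eqP; exact R1_neq_R0. Qed.
HB.instance Definition _ := GRing.Zmodule_isComNzRing.Build R RmulA RmulC Rmul1 RmulD R10.

Local Open Scope ring_scope.
Lemma rsum_big n (f : nat -> R) : rsum n f = \sum_(j < n) f j.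
Proof. elim: n => [|n IH]; first by rewrite big_ord0.
by rewrite big_ord_recr /= IH. Qed.

Lemma pow_m1 j : pow (IZR (Zneg xH)) j = (-1 : R) ^+ j.
Proof. elim: j => [|j IH] //=. rewrite exprS IH.
set u := (-1 : R) ^+ j. rewrite /GRing.mul /GRing.opp /GRing.one /=. ring. Qed.

Lemma det_S n A : det n.+1 A = rsum n.+1 (fun j => Rmult (Rmult (pow (IZR (Zneg xH)) j) (A 0%N j)) (det n (minor0 A j))).
Proof. by []. Qed.

Lemma det_bridge n (A : Mat) : det n A = \det (\matrix_(i < n, j < n) A i j).
Proof.
elim: n A => [|n IH] A.
  by rewrite det_mx00.
rewrite det_S (expand_det_row _ ord0) rsum_big.
apply: eq_bigr => j _.
rewrite /cofactor IH pow_m1 mxE add0n.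
have -> : \matrix_(i < n, k < n) minor0 A j i k = row' ord0 (col' j (\matrix_(i < n.+1, j0 < n.+1) A i j0)).
  apply/matrixP => i k; rewrite !mxE /minor0 /= /bump /=.
  have E : Nat.ltb k j = (k < j)%N.
    case: Nat.ltb_spec => H1; symmetry; [apply/ltP | apply/negbTE/negP => /ltP]; lia.
  rewrite E add1n.
  by case: (ltnP k j).
set u := (-1 : R) ^+ j. set D := \det _. rewrite /GRing.mul /=. ring.
Qed.

Lemma det_mul n A B : det n (mmul n A B) = Rmult (det n A) (det n B).
Proof.
rewrite !det_bridge.
have -> : \matrix_(i < n, j < n) mmul n A B i j = \matrix_(i < n, j < n) A i j *m \matrix_(i < n, j < n) B i j.
  apply/matrixP => i j; rewrite !mxE /mmul rsum_big; apply: eq_bigr => k _; by rewrite !mxE.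
by rewrite det_mulmx.
Qed.
End Bridge.
Open Scope R_scope.
Lemma rsum_ext n f g : (forall k, (k < n)%nat -> f k = g k) -> rsum n f = rsum n g.
Proof. induction n; intros H; simpl; auto. rewrite IHn by (intros; apply H; lia). rewrite H by lia. auto. Qed.
Lemma rsum_plus n f g : rsum n (fun k => f k + g k) = rsum n f + rsum n g.
Proof. induction n; simpl; [ring| rewrite IHn; ring]. Qed.
Lemma rsum_opp n f : rsum n (fun k => - f k) = - rsum n f.
Proof. induction n; simpl; [ring| rewrite IHn; ring]. Qed.
Lemma rsum_zero n : rsum n (fun _ => 0) = 0.
Proof. induction n; simpl; [ring| rewrite IHn; ring]. Qed.
Lemma rsum_scal_l n c f : rsum n (fun k => c * f k) = c * rsum n f.
Proof. induction n; simpl; [ring| rewrite IHn; ring]. Qed.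
Lemma rsum_scal_r n c f : rsum n (fun k => f k * c) = rsum n f * c.
Proof. induction n; simpl; [ring| rewrite IHn; ring]. Qed.
Lemma rsum_swap n m (f : nat -> nat -> R) :
  rsum n (fun i => rsum m (fun j => f i j)) = rsum m (fun j => rsum n (fun i => f i j)).
Proof. induction n; simpl. rewrite rsum_zero; auto. rewrite IHn. rewrite <- rsum_plus. auto. Qed.

Definition madd (A B : Mat) : Mat := fun i j => A i j + B i j.
Definition mopp (A : Mat) : Mat := fun i j => - A i j.
Definition mzero : Mat := fun _ _ => 0.

Lemma mat_ext (A B : Mat) : (forall i j, A i j = B i j) -> A = B.
Proof. intros H. apply functional_extensionality; intro i; apply functional_extensionality; intro j; auto. Qed.

Lemma mmulA n A B C : mmul n (mmul n A B) C = mmul n A (mmul n B C).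
Proof. apply mat_ext; intros i j; unfold mmul.
transitivity (rsum n (fun k => rsum n (fun l => A i l * B l k * C k j))).
apply rsum_ext; intros; rewrite <- rsum_scal_r; auto.
rewrite rsum_swap. apply rsum_ext; intros. rewrite <- rsum_scal_l. apply rsum_ext; intros; ring. Qed.
Lemma mmul_addl n A B C : mmul n (madd A B) C = madd (mmul n A C) (mmul n B C).
Proof. apply mat_ext; intros i j; unfold mmul, madd. rewrite <- rsum_plus. apply rsum_ext; intros; ring. Qed.
Lemma mmul_addr n A B C : mmul n A (madd B C) = madd (mmul n A B) (mmul n A C).
Proof. apply mat_ext; intros i j; unfold mmul, madd. rewrite <- rsum_plus. apply rsum_ext; intros; ring. Qed.
Lemma mmul_oppl n A B : mmul n (mopp A) B = mopp (mmul n A B).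
Proof. apply mat_ext; intros i j; unfold mmul, mopp. rewrite <- rsum_opp. apply rsum_ext; intros; ring. Qed.
Lemma mmul_oppr n A B : mmul n A (mopp B) = mopp (mmul n A B).
Proof. apply mat_ext; intros i j; unfold mmul, mopp. rewrite <- rsum_opp. apply rsum_ext; intros; ring. Qed.
Lemma mmul_0r n A : mmul n A mzero = mzero.
Proof. apply mat_ext; intros i j; unfold mmul, mzero. transitivity (rsum n (fun _ => 0)). apply rsum_ext; intros; ring. apply rsum_zero. Qed.
Lemma madd_0r A : madd A mzero = A.
Proof. apply mat_ext; intros i j; unfold madd, mzero; ring. Qed.
Lemma mtr_mmul n A B : mtr (mmul n A B) = mmul n (mtr B) (mtr A).
Proof. apply mat_ext; intros i j; unfold mmul, mtr. apply rsum_ext; intros; ring. Qed.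
Lemma mtr_mtr A : mtr (mtr A) = A.
Proof. reflexivity. Qed.

Ltac dest6 i := destruct i as [|[|[|[|[|[|i]]]]]].

Lemma key_Phi m1 m2 m3 : mmul 6 Jform (mtr (PhiM m1 m2 m3)) = mopp (mmul 6 (PhiM m1 m2 m3) Jform).
Proof. apply mat_ext; intros i j; unfold mmul, mopp, mtr. dest6 i; dest6 j; cbv [rsum Jform PhiM]; ring. Qed.
Lemma key_Theta m1 m2 m3 d : mmul 6 Jform (mtr (ThetaM m1 m2 m3 d)) = mopp (mmul 6 (ThetaM m1 m2 m3 d) Jform).
Proof. apply mat_ext; intros i j; unfold mmul, mopp, mtr. dest6 i; dest6 j; cbv [rsum Jform ThetaM]; ring. Qed.
Lemma JJ i j : (j < 6)%nat -> mmul 6 Jform Jform i j = idm i j.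
Proof. intros. unfold mmul. dest6 i; dest6 j; try lia; cbv [rsum Jform idm Nat.eqb]; ring. Qed.
Lemma mtr_J : mtr Jform = Jform.
Proof. apply mat_ext; intros i j; unfold mtr. dest6 i; dest6 j; reflexivity. Qed.

Lemma mmul_ext n A B C D : (forall i j, (i < n)%nat -> (j < n)%nat -> A i j = C i j) ->
  (forall i j, (i < n)%nat -> (j < n)%nat -> B i j = D i j) ->
  forall i j, (i < n)%nat -> (j < n)%nat -> mmul n A B i j = mmul n C D i j.
Proof. intros H1 H2 i j Hi Hj. unfold mmul. apply rsum_ext; intros. rewrite H1, H2 by auto. auto. Qed.

Lemma mmul_idm A i j : (j < 6)%nat -> mmul 6 A idm i j = A i j.
Proof. intros. unfold mmul. dest6 j; try lia; cbv [rsum idm Nat.eqb]; ring. Qed.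

Lemma det_ext n A B : (forall i j, (i < n)%nat -> (j < n)%nat -> A i j = B i j) -> det n A = det n B.
Proof. revert A B; induction n; intros A B H; cbn [det]. auto.
apply rsum_ext; intros k Hk. rewrite H by lia. f_equal. apply IHn. intros i j Hi Hj.
unfold minor0. apply H. lia. destruct (Nat.ltb j k); lia. Qed.
Lemma D_ext (f g : R -> R) s l l' : (forall u, f u = g u) -> l = l' ->
  derivable_pt_lim f s l -> derivable_pt_lim g s l'.
Proof. intros H1 H2 H3. replace g with f by (apply functional_extensionality; auto). subst; auto. Qed.

Lemma D_cst (c s : R) : derivable_pt_lim (fun _ => c) s 0.
Proof. apply (derivable_pt_lim_const c s). Qed.

Lemma D_mul f g s a b : derivable_pt_lim f s a -> derivable_pt_lim g s b ->
  derivable_pt_lim (fun u => f u * g u) s (a * g s + f s * b).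
Proof. intros. apply (derivable_pt_lim_mult f g s a b); auto. Qed.
Lemma D_add f g s a b : derivable_pt_lim f s a -> derivable_pt_lim g s b ->
  derivable_pt_lim (fun u => f u + g u) s (a + b).
Proof. intros. apply (derivable_pt_lim_plus f g s a b); auto. Qed.
Lemma D_opp f s a : derivable_pt_lim f s a -> derivable_pt_lim (fun u => - f u) s (- a).
Proof. intros. apply (derivable_pt_lim_opp f s a); auto. Qed.

Lemma D_rsum n (f : nat -> R -> R) (f' : nat -> R) s :
  (forall k, (k < n)%nat -> derivable_pt_lim (f k) s (f' k)) ->
  derivable_pt_lim (fun u => rsum n (fun k => f k u)) s (rsum n f').
Proof. induction n; intros H; simpl. apply D_cst.
apply D_add. apply IHn; intros; apply H; lia. apply H; lia. Qed.

Lemma D_mmul n (A B : R -> Mat) (A' B' : Mat) s :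
  (forall i j, (i < n)%nat -> (j < n)%nat -> derivable_pt_lim (fun u => A u i j) s (A' i j)) ->
  (forall i j, (i < n)%nat -> (j < n)%nat -> derivable_pt_lim (fun u => B u i j) s (B' i j)) ->
  forall i j, (i < n)%nat -> (j < n)%nat ->
  derivable_pt_lim (fun u => mmul n (A u) (B u) i j) s (madd (mmul n A' (B s)) (mmul n (A s) B') i j).
Proof. intros HA HB i j Hi Hj. unfold madd, mmul. rewrite <- rsum_plus.
apply (D_rsum n (fun k u => A u i k * B u k j)). intros k Hk. apply D_mul; auto. Qed.

Lemma const_on (I : R -> Prop) (f : R -> R) :
  is_open_interval I -> (forall s, I s -> derivable_pt_lim f s 0) ->
  forall a b, I a -> I b -> f a = f b.
Proof. intros [_ [Hc _]] Hd.
assert (K : forall a b, I a -> I b -> a < b -> f a = f b).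
{ intros a b Ha Hb Hab. destruct (MVT_cor2 f (fun _ => 0) a b Hab) as [c [Hc1 _]].
  intros c Hc'. apply Hd. apply (Hc a b c); auto. lra. }
intros a b Ha Hb. destruct (Rtotal_order a b) as [H|[H|H]].
apply K; auto. subst; auto. symmetry; apply K; auto. Qed.
Definition DTh (d1 m2 m3 d2 dd d3 : R) : Mat := fun i j =>
  match i, j with
  | 0%nat, 2%nat => - d1 - 2 * m2 * d2 | 0%nat, 3%nat => dd | 0%nat, 4%nat => d2 * m3 + m2 * d3
  | 1%nat, 3%nat => - d2
  | 2%nat, 5%nat => - d1 - 2 * m2 * d2
  | 3%nat, 1%nat => d2 | 3%nat, 5%nat => dd
  | 4%nat, 5%nat => d2 * m3 + m2 * d3
  | _, _ => 0 end.

Lemma DTheta (mu1 mu2 mu3 dmu1 dmu2 ddmu2 dmu3 : R -> R) s :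
  derivable_pt_lim mu1 s (dmu1 s) -> derivable_pt_lim mu2 s (dmu2 s) ->
  derivable_pt_lim dmu2 s (ddmu2 s) -> derivable_pt_lim mu3 s (dmu3 s) ->
  forall i j, derivable_pt_lim (fun u => ThetaM (mu1 u) (mu2 u) (mu3 u) (dmu2 u) i j) s
    (DTh (dmu1 s) (mu2 s) (mu3 s) (dmu2 s) (ddmu2 s) (dmu3 s) i j).
Proof.
intros H1 H2 H3 H4 i j.
assert (A : derivable_pt_lim (fun u => - mu1 u - mu2 u ^ 2) s (- dmu1 s - 2 * mu2 s * dmu2 s)).
{ eapply D_ext. 3: { apply D_add; [apply D_opp; exact H1 | apply D_opp; apply D_mul; [exact H2 | apply D_mul; [exact H2 | apply (D_cst 1)]]]. }
  intro u; simpl; ring. simpl; ring. }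
assert (B : derivable_pt_lim (fun u => mu2 u * mu3 u) s (dmu2 s * mu3 s + mu2 s * dmu3 s)).
{ apply D_mul; auto. }
assert (C : derivable_pt_lim (fun u => - mu2 u) s (- dmu2 s)).
{ apply D_opp; auto. }
destruct i as [|[|[|[|[|[|i]]]]]]; destruct j as [|[|[|[|[|[|j]]]]]]; cbv [ThetaM DTh];
  first [ apply D_cst | assumption ].
Qed.
Lemma cm m1 m2 m3 d1 d2 dd d3 i j : (i<6)%nat -> (j<6)%nat ->
  d1 + 3 * m2 * d2 = 0 -> dd = m2 ^ 3 + 2 * m1 * m2 + m2 * m3 ^ 2 ->
  2 * d2 * m3 + m2 * d3 = 0 ->
  DTh d1 m2 m3 d2 dd d3 i j = mmul 6 (ThetaM m1 m2 m3 d2) (PhiM m1 m2 m3) i j - mmul 6 (PhiM m1 m2 m3) (ThetaM m1 m2 m3 d2) i j.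
Proof. intros Hi Hj E1 E2 E3.
destruct i as [|[|[|[|[|[|i]]]]]]; try lia;
destruct j as [|[|[|[|[|[|j]]]]]]; try lia;
unfold mmul, DTh, ThetaM, PhiM; cbv [rsum]; try lra; try nra. Qed.
Lemma cp m1 m2 m3 d t : m2 <> 0 ->
  charpoly6 (ThetaM m1 m2 m3 d) t = t ^ 6 + 2 * (m1 + 3/2*m2^2) * t ^ 4 - (1 + (d ^ 2 + m2 ^ 4 - 2 * (m1 + 3/2*m2^2) * m2 ^ 2
                     + (m2^2*m3) ^ 2 / m2 ^ 2)) * t ^ 2 - (m2^2*m3) ^ 2.
Proof. intro H.
unfold charpoly6, ThetaM, idm. cbv [det rsum minor0 Nat.ltb Nat.leb Nat.eqb]. field. auto. Qed.

Lemma mmul_tI_l t X Y i j : (i < 6)%nat ->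
  mmul 6 (fun a b => t * idm a b - X a b) Y i j = t * Y i j - mmul 6 X Y i j.
Proof. intros. unfold mmul. dest6 i; try lia; cbv [rsum idm Nat.eqb]; ring. Qed.
Lemma mmul_tI_r t X Y i j : (j < 6)%nat ->
  mmul 6 Y (fun a b => t * idm a b - X a b) i j = t * Y i j - mmul 6 Y X i j.
Proof. intros. unfold mmul. dest6 j; try lia; cbv [rsum idm Nat.eqb]; ring. Qed.

Theorem mainTheorem10
  (I : R -> Prop) (e : R -> Mat)
  (mu1 mu2 mu3 dmu1 dmu2 ddmu2 dmu3 : R -> R) (C1 C2 C3 : R) :
  is_open_interval I ->
  (* derivatives of the curvatures *)
  (forall s, I s -> derivable_pt_lim mu1 s (dmu1 s)) ->
  (forall s, I s -> derivable_pt_lim mu2 s (dmu2 s)) ->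
  (forall s, I s -> derivable_pt_lim dmu2 s (ddmu2 s)) ->
  (forall s, I s -> derivable_pt_lim mu3 s (dmu3 s)) ->
  (* 3-genericity *)
  (forall s, I s -> 0 < mu2 s) ->
  (forall s, I s -> mu3 s <> 0) ->
  (* Frenet frame: e takes values in Mob(4) and e^{-1} de/ds = Phi *)
  (forall s, I s -> in_Mob4 (e s)) ->
  (forall s, I s -> forall i j, (i < 6)%nat -> (j < 6)%nat ->
     derivable_pt_lim (fun u => e u i j) s
       (mmul 6 (e s) (PhiM (mu1 s) (mu2 s) (mu3 s)) i j)) ->
  (* conformal geodesic equations *)
  (forall s, I s -> dmu1 s + 3 * mu2 s * dmu2 s = 0) ->
  (forall s, I s -> ddmu2 s = mu2 s ^ 3 + 2 * mu1 s * mu2 s + mu2 s * mu3 s ^ 2) ->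
  (forall s, I s -> 2 * dmu2 s * mu3 s + mu2 s * dmu3 s = 0) ->
  (* first integrals *)
  (forall s, I s -> mu1 s + 3 / 2 * mu2 s ^ 2 = C1) ->
  (forall s, I s -> mu2 s ^ 2 * mu3 s = C2) ->
  (forall s, I s -> dmu2 s ^ 2 + mu2 s ^ 4 - 2 * C1 * mu2 s ^ 2
                     + C2 ^ 2 / mu2 s ^ 2 = C3) ->
  let Theta := fun s => ThetaM (mu1 s) (mu2 s) (mu3 s) (dmu2 s) in
  let Phi := fun s => PhiM (mu1 s) (mu2 s) (mu3 s) in
  (* dTheta/ds = Theta Phi - Phi Theta on I *)
  (forall s, I s -> forall i j, (i < 6)%nat -> (j < 6)%nat ->
     derivable_pt_lim (fun u => Theta u i j) s
       (mmul 6 (Theta s) (Phi s) i j - mmul 6 (Phi s) (Theta s) i j)) /\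
  (* omega = e Theta e^{-1} is a constant element omega0 of the Lie algebra *)
  (exists omega0 : Mat, in_mob4 omega0 /\
     forall s, I s -> forall i j, (i < 6)%nat -> (j < 6)%nat ->
       mmul 6 (e s) (Theta s) i j = mmul 6 omega0 (e s) i j) /\
  (* characteristic polynomials *)
  (forall s, I s -> forall t,
     charpoly6 (Theta s) t = t ^ 6 + 2 * C1 * t ^ 4 - (1 + C3) * t ^ 2 - C2 ^ 2) /\
  (forall omega0 : Mat,
     (forall s, I s -> forall i j, (i < 6)%nat -> (j < 6)%nat ->
        mmul 6 (e s) (Theta s) i j = mmul 6 omega0 (e s) i j) ->
     forall t, charpoly6 omega0 t = t ^ 6 + 2 * C1 * t ^ 4 - (1 + C3) * t ^ 2 - C2 ^ 2).
Proof.
intros HI Hd1 Hd2 Hdd2 Hd3 Hpos Hnz Hmob He E1 E2 E3 F1 F2 F3.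
cbv zeta.
assert (P1 : forall s, I s -> forall i j, (i < 6)%nat -> (j < 6)%nat ->
     derivable_pt_lim (fun u => ThetaM (mu1 u) (mu2 u) (mu3 u) (dmu2 u) i j) s
       (mmul 6 (ThetaM (mu1 s) (mu2 s) (mu3 s) (dmu2 s)) (PhiM (mu1 s) (mu2 s) (mu3 s)) i j
        - mmul 6 (PhiM (mu1 s) (mu2 s) (mu3 s)) (ThetaM (mu1 s) (mu2 s) (mu3 s) (dmu2 s)) i j)).
{ intros s Hs i j Hi Hj. eapply D_ext.
  3: { apply (DTheta mu1 mu2 mu3 dmu1 dmu2 ddmu2 dmu3 s); auto. }
  intro; reflexivity. apply cm; auto. }
split. exact P1.
set (Th := fun s => ThetaM (mu1 s) (mu2 s) (mu3 s) (dmu2 s)) in *.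
set (Ph := fun s => PhiM (mu1 s) (mu2 s) (mu3 s)) in *.
set (P := fun s => mmul 6 (mtr (e s)) Jform).
set (om := fun s => mmul 6 (mmul 6 (mmul 6 (e s) (Th s)) Jform) (P s)).
assert (Dom : forall s, I s -> forall i j, (i < 6)%nat -> (j < 6)%nat ->
   derivable_pt_lim (fun u => om u i j) s 0).
{ intros s Hs i j Hi Hj.
  set (Com := madd (mmul 6 (Th s) (Ph s)) (mopp (mmul 6 (Ph s) (Th s)))).
  assert (H2 : forall i j, (i < 6)%nat -> (j < 6)%nat ->
     derivable_pt_lim (fun u => mmul 6 (e u) (Th u) i j) s
       (madd (mmul 6 (mmul 6 (e s) (Ph s)) (Th s)) (mmul 6 (e s) Com) i j)).
  { apply D_mmul. intros; apply He; auto.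
    intros a b Ha Hb. eapply D_ext. 3: { apply (P1 s Hs a b Ha Hb). }
    intro; reflexivity. unfold Com, madd, mopp; reflexivity. }
  assert (HJ : forall i j, (i < 6)%nat -> (j < 6)%nat ->
     derivable_pt_lim (fun u => Jform i j) s (mzero i j)).
  { intros; apply D_cst. }
  assert (H3 := D_mmul 6 (fun u => mmul 6 (e u) (Th u)) (fun _ => Jform) _ _ s H2 HJ).
  assert (HP := D_mmul 6 (fun u => mtr (e u)) (fun _ => Jform) (mtr (mmul 6 (e s) (Ph s))) mzero s
     (fun a b Ha Hb => He s Hs b a Hb Ha) HJ).
  assert (H4 := D_mmul 6 _ P _ _ s H3 HP i j Hi Hj).
  eapply D_ext. 3: exact H4. intro; reflexivity.
  simpl. rewrite !mmul_0r, !madd_0r. unfold Com, P.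
  repeat first [rewrite mtr_mmul | rewrite mmul_addl | rewrite mmul_addr | rewrite mmul_oppl
    | rewrite mmul_oppr | rewrite mmulA].
  rewrite <- (mmulA 6 Jform (mtr (Ph s))). unfold Ph. rewrite key_Phi.
  repeat first [rewrite mmul_oppl | rewrite mmul_oppr | rewrite mmulA].
  unfold madd, mopp. cbv beta. ring. }
destruct HI as [[s0 Hs0] HI'].
assert (HI : is_open_interval I) by (split; [exists s0; exact Hs0 | exact HI']).
assert (Cst : forall s, I s -> forall i j, (i < 6)%nat -> (j < 6)%nat -> om s i j = om s0 i j).
{ intros s Hs i j Hi Hj. apply (const_on I (fun u => om u i j) HI); auto.
  }
assert (Rel : forall s, I s -> forall i j, (i < 6)%nat -> (j < 6)%nat ->
   mmul 6 (e s) (Th s) i j = mmul 6 (om s0) (e s) i j).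
{ intros s Hs i j Hi Hj.
  rewrite (mmul_ext 6 (om s0) (e s) (om s) (e s)) by (auto; intros; symmetry; apply Cst; auto).
  unfold om, P. rewrite !mmulA.
  destruct (Hmob s Hs) as [HM _].
  symmetry. apply mmul_ext; auto. intros a b Ha Hb.
  rewrite <- (mmul_idm (Th s) a b Hb). apply mmul_ext; auto. intros c d Hc Hd.
  rewrite <- JJ by auto. apply mmul_ext; auto. }
split.
{ exists (om s0). split.
  { intros i j Hi Hj. unfold om, P.
    repeat first [rewrite mtr_mmul | rewrite mmulA]. rewrite mtr_J, mtr_mtr.
    rewrite <- (mmulA 6 Jform (mtr (Th s0))). unfold Th. rewrite key_Theta.
    repeat first [rewrite mmul_oppl | rewrite mmul_oppr | rewrite mmulA].
    unfold mopp. ring. }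
  exact Rel. }
assert (CP : forall s, I s -> forall t,
   charpoly6 (Th s) t = t ^ 6 + 2 * C1 * t ^ 4 - (1 + C3) * t ^ 2 - C2 ^ 2).
{ intros s Hs t. rewrite <- (F3 s Hs), <- (F2 s Hs), <- (F1 s Hs). unfold Th.
  apply cp. specialize (Hpos s Hs). lra. }
split. exact CP.
intros w Hw t. rewrite <- (CP s0 Hs0 t).
destruct (Hmob s0 Hs0) as [_ [Hdet _]].
unfold charpoly6.
transitivity (det 6 (fun a b => t * idm a b - w a b) * det 6 (e s0)).
{ rewrite Hdet; ring. }
transitivity (det 6 (e s0) * det 6 (fun a b => t * idm a b - Th s0 a b)).
2: { rewrite Hdet; ring. }
rewrite <- !Bridge.det_mul. apply det_ext. intros i j Hi Hj.
rewrite mmul_tI_l, mmul_tI_r by auto. rewrite Hw by auto. reflexivity.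
Qed.
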